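(* Let $\mathcal{D}$ be a category with pullbacks and $(\mathcal{E},\mathcal{M})$ a stable orthogonal factorization system on $\mathcal{D}$, and let $\mathcal{A}$ be any category. Then the componentwise lifting of $(\mathcal{E},\mathcal{M})$ to $[\mathcal{A},\mathcal{D}]$ (natural transformations all of whose components are in $\mathcal{E}$, respectively in $\mathcal{M}$) restricts to an orthogonal factorization system on $\mathrm{CartNt}[\mathcal{A},\mathcal{D}]$, the category of all functors $\mathcal{A}\to\mathcal{D}$ and cartesian natural transformations.
   Context: An orthogonal factorization system $(\mathcal{E},\mathcal{M})$: both classes contain all isomorphisms and are closed under composition; each commuting square $g\circ e = m\circ f$ with $e\in\mathcal{E}$, $m\in\mathcal{M}$ has a unique diagonal $d$ with $d\circ e=f$, $m\circ d=g$; every morphism factors as $m\circ e$ with $e\in\mathcal{E}$, $m\in\mathcal{M}$. It is stable if $\mathcal{E}$ is closed under pullback along arbitrary morphisms. The componentwise lifting is an orthogonal factorization system on $[\mathcal{A},\mathcal{D}]$, with factorizations computed componentwise. A natural transformation is cartesian if all of its naturality squares are pullbacks. *)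

(* Defs.v *)
From Stdlib Require Import ProofIrrelevance FunctionalExtensionality.
Set Implicit Arguments.

Record Category := {
  ob :> Type;
  hom : ob -> ob -> Type;
  idm : forall a, hom a a;
  comp : forall a b c, hom b c -> hom a b -> hom a c;
  comp_idl : forall a b (f : hom a b), comp (idm b) f = f;
  comp_idr : forall a b (f : hom a b), comp f (idm a) = f;
  comp_assoc : forall a b c d (f : hom a b) (g : hom b c) (h : hom c d),
      comp h (comp g f) = comp (comp h g) f
}.
Arguments hom {_} _ _.
Arguments idm {_} _.
Arguments comp {_ _ _ _} _ _.

Record Functor (A D : Category) := {
  fobj :> A -> D;
  fmap : forall a b, hom a b -> hom (fobj a) (fobj b);
  fmap_id : forall a, fmap a a (idm a) = idm (fobj a);
  fmap_comp : forall a b c (f : hom a b) (g : hom b c),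
      fmap a c (comp g f) = comp (fmap b c g) (fmap a b f)
}.
Arguments fmap {A D} _ {a b} _.

Record NatTrans (A D : Category) (F G : Functor A D) := {
  ntc :> forall a, hom (F a) (G a);
  nt_natural : forall a b (f : hom a b),
      comp (fmap G f) (ntc a) = comp (ntc b) (fmap F f)
}.

(** * Pullbacks.  The square
       P --p1--> X
       |p2       |f
       v         v
       Y --g---> Z
    is a pullback. *)
Definition is_pullback (C : Category) (P X Y Z : C)
  (p1 : hom P X) (p2 : hom P Y) (f : hom X Z) (g : hom Y Z) : Prop :=
  comp f p1 = comp g p2 /\
  forall (Q : C) (q1 : hom Q X) (q2 : hom Q Y), comp f q1 = comp g q2 ->
    exists! u : hom Q P, comp p1 u = q1 /\ comp p2 u = q2.

Arguments is_pullback {C P X Y Z} p1 p2 f g.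

Definition has_pullbacks (C : Category) : Prop :=
  forall (X Y Z : C) (f : hom X Z) (g : hom Y Z),
    exists (P : C) (p1 : hom P X) (p2 : hom P Y), is_pullback p1 p2 f g.

Section OFS.
Variables (ob : Type) (hom : ob -> ob -> Type)
  (comp : forall a b c, hom b c -> hom a b -> hom a c)
  (idm : forall a, hom a a).
Arguments comp {a b c}.

Definition is_iso a b (f : hom a b) : Prop :=
  exists g : hom b a, comp g f = idm a /\ comp f g = idm b.

Definition is_OFS (E M : forall a b, hom a b -> Prop) : Prop :=
  (forall a b (f : hom a b), is_iso f -> E a b f) /\
  (forall a b (f : hom a b), is_iso f -> M a b f) /\
  (forall a b c (f : hom a b) (g : hom b c), E a b f -> E b c g -> E a c (comp g f)) /\
  (forall a b c (f : hom a b) (g : hom b c), M a b f -> M b c g -> M a c (comp g f)) /\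
  (forall a b c d (e : hom a b) (m : hom c d) (f : hom a c) (g : hom b d),
      E a b e -> M c d m -> comp g e = comp m f ->
      exists! dg : hom b c, comp dg e = f /\ comp m dg = g) /\
  (forall a b (h : hom a b),
      exists c (e : hom a c) (m : hom c b), E a c e /\ M c b m /\ comp m e = h).
End OFS.
Arguments is_iso {ob hom} comp idm {a b} f.
Arguments is_OFS {ob hom} comp idm E M.

Definition stable (C : Category) (E : forall a b : C, hom a b -> Prop) : Prop :=
  forall (P X Y Z : C) (p1 : hom P X) (p2 : hom P Y) (e : hom X Z) (g : hom Y Z),
    is_pullback p1 p2 e g -> E X Z e -> E P Y p2.

Definition cartesian (A D : Category) (F G : Functor A D) (eta : NatTrans F G) : Prop :=
  forall (a b : A) (f : hom a b),
    is_pullback (eta a) (fmap F f) (fmap G f) (eta b).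

Definition nt_id (A D : Category) (F : Functor A D) : NatTrans F F.
Proof.
  refine {| ntc := fun a => idm (F a) |}.
  intros a b f. now rewrite comp_idl, comp_idr.
Defined.

Definition nt_comp (A D : Category) (F G H : Functor A D)
  (beta : NatTrans G H) (alpha : NatTrans F G) : NatTrans F H.
Proof.
  refine {| ntc := fun a => comp (beta a) (alpha a) |}.
  intros a b f.
  rewrite comp_assoc, nt_natural, <- comp_assoc, nt_natural, comp_assoc.
  reflexivity.
Defined.

Lemma cartesian_id (A D : Category) (F : Functor A D) : cartesian (nt_id F).
Proof.
  intros a b f; simpl; split.
  - now rewrite comp_idl, comp_idr.
  - intros Q q1 q2 Hq. rewrite comp_idl in Hq.
    exists q1. split.
    + split; [apply comp_idl | now rewrite Hq].
    + intros u [Hu _]. now rewrite comp_idl in Hu.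
Qed.

Lemma cartesian_comp (A D : Category) (F G H : Functor A D)
  (beta : NatTrans G H) (alpha : NatTrans F G) :
  cartesian beta -> cartesian alpha -> cartesian (nt_comp beta alpha).
Proof.
  intros Hb Ha a b f; simpl.
  destruct (Hb a b f) as [Sb Ub]. destruct (Ha a b f) as [Sa Ua].
  split.
  - rewrite comp_assoc, Sb, <- comp_assoc, Sa, comp_assoc. reflexivity.
  - intros Q q1 q2 Hq.
    rewrite <- comp_assoc in Hq.
    destruct (Ub Q q1 (comp (alpha b) q2) Hq) as [v [[Hv1 Hv2] Hvu]].
    destruct (Ua Q v q2 Hv2) as [u [[Hu1 Hu2] Huu]].
    exists u. split.
    + split; [now rewrite <- comp_assoc, Hu1 | exact Hu2].
    + intros u' [H1 H2]. apply Huu. split; [|exact H2].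
      symmetry. apply Hvu. split.
      * now rewrite comp_assoc.
      * rewrite comp_assoc, Sa, <- comp_assoc, H2. reflexivity.
Qed.

Definition CartHom (A D : Category) (F G : Functor A D) : Type :=
  { eta : NatTrans F G | cartesian eta }.

Definition CartId (A D : Category) (F : Functor A D) : CartHom F F :=
  exist _ (nt_id F) (cartesian_id F).

Definition CartComp (A D : Category) (F G H : Functor A D)
  (beta : CartHom G H) (alpha : CartHom F G) : CartHom F H :=
  exist _ (nt_comp (proj1_sig beta) (proj1_sig alpha))
    (cartesian_comp (proj2_sig beta) (proj2_sig alpha)).

Definition cart_lift (A D : Category) (K : forall a b : D, hom a b -> Prop)
  (F G : Functor A D) (eta : CartHom F G) : Prop :=
  forall a : A, K (F a) (G a) (proj1_sig eta a).
Arguments cart_lift {A D} K F G eta.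
Arguments stable {C} E.

(* Main.v *)
Require Import Defs.
From Stdlib Require Import ProofIrrelevance FunctionalExtensionality IndefiniteDescription.

Lemma pb_sym (C : Category) (P X Y Z : C) (p1 : hom P X) (p2 : hom P Y)
  (f : hom X Z) (g : hom Y Z) : is_pullback p1 p2 f g -> is_pullback p2 p1 g f.
Proof.
  intros [H U]; split; [symmetry; exact H|].
  intros Q q1 q2 Hq. destruct (U Q q2 q1 (eq_sym Hq)) as [u [[H1 H2] Hu]].
  exists u; split; [split; assumption| intros u' [H1' H2']; apply Hu; split; assumption].
Qed.

Lemma pb_paste_left (C : Category) (A1 B1 C1 A2 B2 C2 : C) (x1 : hom A1 B1)
  (y1 : hom B1 C1) (a : hom A1 A2) (b : hom B1 B2) (c : hom C1 C2)
  (x2 : hom A2 B2) (y2 : hom B2 C2) :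
  comp b x1 = comp x2 a -> is_pullback y1 b c y2 ->
  is_pullback (comp y1 x1) a c (comp y2 x2) -> is_pullback x1 a b x2.
Proof.
  intros Hsq [Hr Ur] [Ho Uo]. split; [exact Hsq|].
  intros Q q1 q2 Hq.
  assert (Hq' : comp c (comp y1 q1) = comp (comp y2 x2) q2).
  { rewrite comp_assoc, Hr, <- comp_assoc, Hq, comp_assoc. reflexivity. }
  destruct (Uo Q _ _ Hq') as [v [[Hv1 Hv2] Hvu]].
  exists v. split. split; [|exact Hv2].
  - assert (Hc : comp c (comp y1 q1) = comp y2 (comp b q1)).
    { rewrite !comp_assoc, Hr. reflexivity. }
    destruct (Ur Q _ _ Hc) as [z [_ Hz]].
    transitivity z; [symmetry|]; apply Hz; split; try reflexivity.
    + rewrite comp_assoc; exact Hv1.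
    + rewrite comp_assoc, Hsq, <- comp_assoc, Hv2. exact (eq_sym Hq).
  - intros v' [H1 H2]. apply Hvu. split; [rewrite <- comp_assoc, H1; reflexivity | exact H2].
Qed.

Lemma comp_cancel (C : Category) (X Y Q : C) (k : hom Y X) (l : hom X Y) (z : hom Q X) :
  comp k l = idm X -> comp k (comp l z) = z.
Proof. intros H. rewrite comp_assoc, H, comp_idl. reflexivity. Qed.

Lemma pb_iso (C : Category) (P X Y Z K : C) (p1 : hom P X) (p2 : hom P Y)
  (f : hom X Z) (g : hom Y Z) (k : hom K P) (l : hom P K) :
  is_pullback p1 p2 f g -> comp l k = idm K -> comp k l = idm P ->
  is_pullback (comp p1 k) (comp p2 k) f g.
Proof.
  intros [H U] Hlk Hkl. split.
  - rewrite !comp_assoc, H; reflexivity.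
  - intros Q q1 q2 Hq. destruct (U Q q1 q2 Hq) as [z [[Hz1 Hz2] Hzu]].
    exists (comp l z). split. split.
    + rewrite <- comp_assoc, comp_cancel by exact Hkl. exact Hz1.
    + rewrite <- comp_assoc, comp_cancel by exact Hkl. exact Hz2.
    + intros w [H1 H2].
      assert (Hw : z = comp k w) by (apply Hzu; split; rewrite comp_assoc; assumption).
      rewrite Hw, comp_cancel by exact Hlk. reflexivity.
Qed.

Lemma cart_eq (A D : Category) (F G : Functor A D) (x y : CartHom F G) :
  (forall a, proj1_sig x a = proj1_sig y a) -> x = y.
Proof.
  destruct x as [[x xn] xc], y as [[y yn] yc]; simpl; intro H.
  assert (x = y) by (apply functional_extensionality_dep; exact H). subst y.
  assert (xn = yn) by apply proof_irrelevance. subst yn.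
  f_equal. apply proof_irrelevance.
Qed.

Definition Diag (D : Category) (E M : forall a b : D, hom a b -> Prop) :=
  forall a b c d (e : hom a b) (m : hom c d) (f : hom a c) (g : hom b d),
    E a b e -> M c d m -> comp g e = comp m f ->
    exists! dg : hom b c, comp dg e = f /\ comp m dg = g.

Lemma diag_uniq (D : Category) E M (Hdiag : Diag D E M) a b c d (e : hom a b)
  (m : hom c d) f g (x y : hom b c) :
  E a b e -> M c d m -> comp x e = f -> comp m x = g -> comp y e = f ->
  comp m y = g -> x = y.
Proof.
  intros He Hm H1 H2 H3 H4. subst f g.
  assert (Hc : comp (comp m x) e = comp m (comp x e)) by (symmetry; apply comp_assoc).
  destruct (Hdiag _ _ _ _ e m _ _ He Hm Hc) as [z [_ U]].
  transitivity z; [symmetry|]; apply U; split; auto.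
Qed.

Lemma diag_lift (A D : Category) E M (Hdiag : Diag D E M) (F G H K : Functor A D)
  (e : CartHom F G) (m : CartHom H K) (f : CartHom F H) (g : CartHom G K) :
  cart_lift E F G e -> cart_lift M H K m -> CartComp g e = CartComp m f ->
  exists! dg : CartHom G H, CartComp dg e = f /\ CartComp m dg = g.
Proof.
  intros He Hm Heq.
  assert (Hc : forall a, comp (proj1_sig g a) (proj1_sig e a) = comp (proj1_sig m a) (proj1_sig f a)).
  { intro a. exact (f_equal (fun t : CartHom F K => ntc (proj1_sig t) a) Heq). }
  assert (Hd : forall a, {d : hom (G a) (H a) |
     comp d (proj1_sig e a) = proj1_sig f a /\ comp (proj1_sig m a) d = proj1_sig g a}).
  { intro a. destruct (constructive_indefinite_description _ (Hdiag _ _ _ _ _ _ _ _ (He a) (Hm a) (Hc a))) as [d [Hd _]].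
    exists d; exact Hd. }
  pose (dfun := fun a => proj1_sig (Hd a)).
  assert (Hds : forall a, comp (dfun a) (proj1_sig e a) = proj1_sig f a /\
                 comp (proj1_sig m a) (dfun a) = proj1_sig g a).
  { intro a. exact (proj2_sig (Hd a)). }
  clearbody dfun.
  assert (Hnat : forall a b (u : hom a b), comp (fmap H u) (dfun a) = comp (dfun b) (fmap G u)).
  { intros a b u.
    destruct (Hds a) as [Ha1 Ha2]. destruct (Hds b) as [Hb1 Hb2].
    apply (@diag_uniq _ _ _ Hdiag _ _ _ _ _ _ (comp (fmap H u) (proj1_sig f a))
             (comp (fmap K u) (proj1_sig g a)) _ _ (He a) (Hm b)).
    - rewrite <- comp_assoc, Ha1. reflexivity.
    - rewrite comp_assoc, <- (nt_natural (proj1_sig m)), <- comp_assoc, Ha2. reflexivity.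
    - rewrite <- comp_assoc, (nt_natural (proj1_sig e)), comp_assoc, Hb1.
      symmetry. apply (nt_natural (proj1_sig f)).
    - rewrite comp_assoc, Hb2. symmetry. apply (nt_natural (proj1_sig g)). }
  assert (Hcart : forall a b (u : hom a b), is_pullback (dfun a) (fmap G u) (fmap H u) (dfun b)).
  { intros a b u. apply pb_paste_left with (y1 := proj1_sig m a) (c := fmap K u) (y2 := proj1_sig m b).
    - apply Hnat.
    - exact (proj2_sig m a b u).
    - rewrite (proj2 (Hds a)), (proj2 (Hds b)). exact (proj2_sig g a b u). }
  pose (dn := {| ntc := dfun; nt_natural := Hnat |}).
  exists (exist _ dn Hcart). split.
  - split; apply cart_eq; intro a; simpl; apply Hds.
  - intros dg' [H1 H2]. apply cart_eq; intro a; simpl.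
    apply (@diag_uniq _ _ _ Hdiag _ _ _ _ _ _ (proj1_sig f a) (proj1_sig g a) _ _ (He a) (Hm a)); try apply Hds.
    + exact (f_equal (fun t : CartHom F H => ntc (proj1_sig t) a) H1).
    + exact (f_equal (fun t : CartHom G K => ntc (proj1_sig t) a) H2).
Qed.

Lemma fact_lift (A D : Category) E M (Hdiag : Diag D E M) (HD : has_pullbacks D)
  (Hstab : stable E) (F G : Functor A D) (h : CartHom F G) (Ho : A -> D)
  (ee : forall a, hom (F a) (Ho a)) (mm : forall a, hom (Ho a) (G a))
  (HE : forall a, E _ _ (ee a)) (HM : forall a, M _ _ (mm a))
  (Hh : forall a, comp (mm a) (ee a) = proj1_sig h a) :
  exists (H : Functor A D) (e : CartHom F H) (m : CartHom H G),
    cart_lift E F H e /\ cart_lift M H G m /\ CartComp m e = h.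
Proof.
  assert (Hm : forall a b (u : hom a b), {x : hom (Ho a) (Ho b) |
     comp x (ee a) = comp (ee b) (fmap F u) /\ comp (mm b) x = comp (fmap G u) (mm a)}).
  { intros a b u.
    assert (Hc : comp (comp (fmap G u) (mm a)) (ee a) = comp (mm b) (comp (ee b) (fmap F u))).
    { rewrite <- comp_assoc, Hh, comp_assoc, Hh. apply (nt_natural (proj1_sig h)). }
    destruct (constructive_indefinite_description _ (Hdiag _ _ _ _ _ _ _ _ (HE a) (HM b) Hc)) as [d [Hd _]].
    exists d; exact Hd. }
  pose (Hmap := fun a b u => proj1_sig (Hm a b u)).
  assert (Hms : forall a b (u : hom a b), comp (Hmap a b u) (ee a) = comp (ee b) (fmap F u) /\
             comp (mm b) (Hmap a b u) = comp (fmap G u) (mm a)).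
  { intros a b u. exact (proj2_sig (Hm a b u)). }
  clearbody Hmap. clear Hm.
  assert (Hid : forall a, Hmap a a (idm a) = idm (Ho a)).
  { intro a. destruct (Hms a a (idm a)) as [H1 H2].
    apply (@diag_uniq _ _ _ Hdiag _ _ _ _ _ _ _ _ _ _ (HE a) (HM a) H1 H2).
    - rewrite comp_idl, fmap_id, comp_idr. reflexivity.
    - rewrite comp_idr, fmap_id, comp_idl. reflexivity. }
  assert (Hcomp : forall a b c (u : hom a b) (v : hom b c),
            Hmap a c (comp v u) = comp (Hmap b c v) (Hmap a b u)).
  { intros a b c u v. destruct (Hms a c (comp v u)) as [H1 H2].
    destruct (Hms a b u) as [U1 U2]. destruct (Hms b c v) as [V1 V2].
    apply (@diag_uniq _ _ _ Hdiag _ _ _ _ _ _ _ _ _ _ (HE a) (HM c) H1 H2).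
    - rewrite <- comp_assoc, U1, comp_assoc, V1, <- comp_assoc, <- fmap_comp. reflexivity.
    - rewrite comp_assoc, V2, <- comp_assoc, U2, comp_assoc, <- fmap_comp. reflexivity. }
  pose (HF := {| fobj := Ho; fmap := Hmap; fmap_id := Hid; fmap_comp := Hcomp |}).
  assert (Hcm : forall a b (u : hom a b), is_pullback (mm a) (Hmap a b u) (fmap G u) (mm b)).
  { intros a b u.
    destruct (Hms a b u) as [S1 S2].
    destruct (HD _ _ _ (fmap G u) (mm b)) as [P [p [q Hpb]]].
    pose proof Hpb as [Hpc Hpu].
    assert (Hj : comp (fmap G u) (proj1_sig h a) = comp (mm b) (comp (ee b) (fmap F u))).
    { rewrite comp_assoc, Hh. apply (nt_natural (proj1_sig h)). }
    destruct (Hpu _ _ _ Hj) as [j [[J1 J2] Ju]].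
    assert (Hk : comp (fmap G u) (mm a) = comp (mm b) (Hmap a b u)) by (symmetry; exact S2).
    destruct (Hpu _ _ _ Hk) as [k [[K1 K2] _]].
    assert (Hjpb : is_pullback j (fmap F u) q (ee b)).
    { apply pb_paste_left with (y1 := p) (c := fmap G u) (y2 := mm b).
      - exact J2.
      - exact Hpb.
      - rewrite J1, Hh. exact (proj2_sig h a b u). }
    assert (HEj : E _ _ j) by (eapply Hstab; [apply pb_sym; exact Hjpb | exact (HE b)]).
    assert (Hkj : comp k (ee a) = j).
    { symmetry. apply Ju. split.
      - rewrite comp_assoc, K1. apply Hh.
      - rewrite comp_assoc, K2. exact S1. }
    assert (Hl : comp p j = comp (mm a) (ee a)) by (rewrite J1; symmetry; apply Hh).
    destruct (Hdiag _ _ _ _ _ _ _ _ HEj (HM a) Hl) as [l [[L1 L2] _]].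
    assert (Hlk : comp l k = idm (Ho a)).
    { apply (@diag_uniq _ _ _ Hdiag _ _ _ _ (ee a) (mm a) (ee a) (mm a) _ _ (HE a) (HM a)).
      - rewrite <- comp_assoc, Hkj. exact L1.
      - rewrite comp_assoc, L2. exact K1.
      - apply comp_idl.
      - apply comp_idr. }
    assert (Hul : comp (Hmap a b u) l = q).
    { apply (@diag_uniq _ _ _ Hdiag _ _ _ _ j (mm b) (comp (ee b) (fmap F u)) (comp (fmap G u) p)
               _ _ HEj (HM b)).
      - rewrite <- comp_assoc, L1. exact S1.
      - rewrite comp_assoc, S2, <- comp_assoc, L2. reflexivity.
      - exact J2.
      - symmetry; exact Hpc. }
    assert (Hkl : comp k l = idm P).
    { destruct (Hpu _ _ _ Hpc) as [z [_ Zu]].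
      transitivity z; [symmetry|]; apply Zu; split.
      - rewrite comp_assoc, K1. exact L2.
      - rewrite comp_assoc, K2. exact Hul.
      - apply comp_idr.
      - apply comp_idr. }
    rewrite <- K1, <- K2. exact (pb_iso _ _ _ _ _ _ _ _ _ _ _ _ Hpb Hlk Hkl). }
  assert (Hen : forall a b (u : hom a b), comp (fmap HF u) (ee a) = comp (ee b) (fmap F u)).
  { intros a b u. exact (proj1 (Hms a b u)). }
  assert (Hmn : forall a b (u : hom a b), comp (fmap G u) (mm a) = comp (mm b) (fmap HF u)).
  { intros a b u. symmetry. exact (proj2 (Hms a b u)). }
  pose (en := {| ntc := (ee : forall a, hom (F a) (HF a)); nt_natural := Hen |}).
  pose (mn := {| ntc := (mm : forall a, hom (HF a) (G a)); nt_natural := Hmn |}).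
  assert (Hmc : cartesian mn) by (intros a b u; exact (Hcm a b u)).
  assert (Hec : cartesian en).
  { intros a b u. simpl.
    apply pb_paste_left with (y1 := mm a) (c := fmap G u) (y2 := mm b).
    - exact (proj1 (Hms a b u)).
    - exact (Hcm a b u).
    - rewrite !Hh. exact (proj2_sig h a b u). }
  exists HF, (exist _ en Hec), (exist _ mn Hmc).
  split; [|split].
  - intro a. exact (HE a).
  - intro a. exact (HM a).
  - apply cart_eq. intro a. simpl. apply Hh.
Qed.

Theorem lemma4p7 (A D : Category) (E M : forall a b : D, hom a b -> Prop) :
  has_pullbacks D ->
  is_OFS (@comp D) (@idm D) E M ->
  stable E ->
  is_OFS (@CartComp A D) (@CartId A D) (cart_lift E) (cart_lift M).
Proof.
  intros HD [HisoE [HisoM [HcE [HcM [Hdiag Hfact]]]]] Hstab.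
  split; [|split; [|split; [|split; [|split]]]].
  - intros F G eta [th [H1 H2]] a. apply HisoE. exists (proj1_sig th a). split.
    + exact (f_equal (fun t : CartHom F F => ntc (proj1_sig t) a) H1).
    + exact (f_equal (fun t : CartHom G G => ntc (proj1_sig t) a) H2).
  - intros F G eta [th [H1 H2]] a. apply HisoM. exists (proj1_sig th a). split.
    + exact (f_equal (fun t : CartHom F F => ntc (proj1_sig t) a) H1).
    + exact (f_equal (fun t : CartHom G G => ntc (proj1_sig t) a) H2).
  - intros F G H f g Hf Hg a. simpl. apply HcE; auto.
  - intros F G H f g Hf Hg a. simpl. apply HcM; auto.
  - intros F G H K e m f g He Hm Heq. exact (@diag_lift A D E M Hdiag F G H K e m f g He Hm Heq).
  - intros F G h.
    assert (Hf : forall a, {c : D & {e : hom (F a) c & {m : hom c (G a) |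
                  E _ _ e /\ M _ _ m /\ comp m e = proj1_sig h a}}}).
    { intro a. destruct (constructive_indefinite_description _ (Hfact _ _ (proj1_sig h a))) as [c Hc].
      destruct (constructive_indefinite_description _ Hc) as [e He].
      destruct (constructive_indefinite_description _ He) as [m Hm].
      exact (existT _ c (existT _ e (exist _ m Hm))). }
    apply (@fact_lift A D E M Hdiag HD Hstab F G h (fun a => projT1 (Hf a))
             (fun a => projT1 (projT2 (Hf a))) (fun a => proj1_sig (projT2 (projT2 (Hf a))))).
    + intro a. exact (proj1 (proj2_sig (projT2 (projT2 (Hf a))))).
    + intro a. exact (proj1 (proj2 (proj2_sig (projT2 (projT2 (Hf a)))))).
    + intro a. exact (proj2 (proj2 (proj2_sig (projT2 (projT2 (Hf a)))))).
Qed.
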